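(* Let $k\ge 2$ be an integer and let $G$ be a finite simple connected graph of order $n\ge k$. Then $$W_{tsp,k}(G)\le k\binom{n}{k}\mu(G)=\frac{2}{k-1}\binom{n-2}{k-2}W(G).$$ Equality holds if and only if $k\in\{2,3\}$, or $k>3$ and $G$ is the star $S_n$ or the complete graph $K_n$.
   Context: $d(u,v)$ is the graph distance; $W(G)=\sum_{\{u,v\}\subseteq V}d(u,v)$ is the Wiener index and $\mu(G)=W(G)/\binom{n}{2}$ the average distance. For a set $S$ of $k$ vertices, $\mathrm{tsp}_k(S)$ is the length (number of edge traversals, with multiplicity) of a shortest closed walk in $G$ visiting all vertices of $S$, and $W_{tsp,k}(G)=\sum_{S\subseteq V,\,|S|=k}\mathrm{tsp}_k(S)$. $S_n$ denotes the star $K_{1,n-1}$. *)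

(* Defs.v *)
From Stdlib Require Import ClassicalEpsilon.
From mathcomp Require Import all_boot all_order all_algebra.
Set Implicit Arguments. Unset Strict Implicit. Unset Printing Implicit Defensive.
Import Order.TTheory GRing.Theory Num.Theory.

(* Least natural number satisfying P (meaningful when P is inhabited,
   which is always the case below since the graph is connected). *)
Definition nat_min (P : nat -> Prop) : nat :=
  epsilon (inhabits 0%N) (fun m => P m /\ forall j, P j -> (m <= j)%N).

Section Graph.
Variables (T : finType) (e : rel T).

Definition dist (u v : T) : nat :=
  nat_min (fun m => exists p : seq T, [/\ path e u p, last u p = v & size p = m]).

Definition tsp (S : {set T}) : nat :=
  nat_min (fun m => exists (x : T) (p : seq T),
    [/\ path e x p, last x p = x, {subset S <= x :: p} & size p = m]).

Definition Wiener : nat :=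
  (\sum_(u : T) \sum_(v : T | enum_rank u < enum_rank v) dist u v)%N.

Definition mu : rat := (Wiener%:R / 'C(#|T|, 2)%:R)%R.

Definition Wtsp (k : nat) : nat :=
  (\sum_(S : {set T} | #|S| == k) tsp S)%N.

Definition is_complete : Prop := forall u v : T, u != v -> e u v.

Definition is_star : Prop :=
  exists c : T, forall u v : T, u != v -> (e u v <-> (u == c) || (v == c)).

End Graph.

(* Main.v *)
Require Import Defs.
From Stdlib Require Import ClassicalEpsilon Classical.
From mathcomp Require Import all_boot all_order all_algebra all_fingroup.
From mathcomp Require Import zify ring lra.
Set Implicit Arguments. Unset Strict Implicit. Unset Printing Implicit Defensive.
Import Order.TTheory GRing.Theory Num.Theory.

Lemma nat_min_exists (P : nat -> Prop) :
  (exists j, P j) -> exists m, P m /\ forall j, P j -> (m <= j)%N.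
Proof.
move=> [j Pj]; elim: j {-2}j (leqnn j) Pj => [|n IH] j.
  rewrite leqn0 => /eqP -> P0; exists 0%N; split=> //.
move=> jle Pj.
case: (classic (exists i, P i /\ (i < j)%N)) => [[i [Pi lij]]|no].
  by apply: (IH i); [lia|].
exists j; split=> // i Pi; case: (leqP j i) => // lt; exfalso; apply: no; exists i; done.
Qed.

Lemma nat_min_spec (P : nat -> Prop) :
  (exists j, P j) -> P (nat_min P) /\ forall j, P j -> (nat_min P <= j)%N.
Proof.
move=> /nat_min_exists ex; rewrite /nat_min.
by apply: (epsilon_spec (inhabits 0%N) (fun m => P m /\ forall j, P j -> (m <= j)%N)).
Qed.

Section Graph.
Variables (T : finType) (e : rel T).
Hypothesis e_sym : symmetric e.
Hypothesis e_irr : irreflexive e.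
Hypothesis e_conn : forall u v : T, connect e u v.

Notation d := (dist e).

Lemma walk_ex u v : exists m p, [/\ path e u p, last u p = v & size p = m].
Proof.
by have /connectP [p pp ->] := e_conn u v; exists (size p), p.
Qed.

Lemma dist_spec u v : exists p, [/\ path e u p, last u p = v & size p = d u v].
Proof.
by have [H _] := nat_min_spec (walk_ex u v).
Qed.

Lemma dist_le u p : path e u p -> (d u (last u p) <= size p)%N.
Proof.
move=> pp; have [_ H] := nat_min_spec (walk_ex u (last u p)).
by apply: H; exists p.
Qed.

Lemma dist_le' u v p : path e u p -> last u p = v -> (d u v <= size p)%N.
Proof. by move=> pp <-; apply: dist_le. Qed.

Lemma dist0 u : d u u = 0%N.
Proof. by apply/eqP; rewrite -leqn0 (dist_le' (p := [::])). Qed.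

Lemma dist_eq0 u v : d u v = 0%N -> u = v.
Proof. by case: (dist_spec u v) => [[|x p]] [_ <-] //= <-. Qed.

Lemma dist_triangle u v w : (d u w <= d u v + d v w)%N.
Proof.
case: (dist_spec u v) => p [pp lp sp]; case: (dist_spec v w) => q [pq lq sq].
rewrite -sp -sq -size_cat; apply: (dist_le' (p := p ++ q)).
  by rewrite cat_path pp lp.
by rewrite last_cat lp.
Qed.

Lemma dist_sym u v : d u v = d v u.
Proof.
suff H : forall a b, (d a b <= d b a)%N by apply/eqP; rewrite eqn_leq !H.
move=> a b; case: (dist_spec b a) => p [pp lp sp].
rewrite -sp; have := rev_path e b p; rewrite lp => rp.
have -> : size p = size (rev (belast b p)) by rewrite size_rev size_belast.
apply: (dist_le' (p := rev (belast b p))).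
  have Hs : (fun z => e^~ z) =2 e by move=> x y; rewrite /= e_sym.
  by rewrite rp (eq_path Hs).
case: p pp lp {sp rp} => [|x p] _ /= lp; first by rewrite lp.
by rewrite rev_cons last_rcons.
Qed.

Lemma dist_edge u v : e u v -> (d u v <= 1)%N.
Proof. by move=> uv; apply: (dist_le' (p := [:: v])) => //=; rewrite uv. Qed.

Lemma dist1_edge u v : d u v = 1%N -> e u v.
Proof.
move=> H; case: (dist_spec u v) => p [pp lp sp]; rewrite H in sp.
by case: p pp lp sp => [|x [|y p]] //= /andP [uv _] <- _.
Qed.

Lemma dist_edgeE u v : u != v -> e u v -> d u v = 1%N.
Proof.
move=> neq uv; have := dist_edge uv; case H: (d u v) => [|[|]] //.
by move/dist_eq0: H => /eqP; rewrite (negbTE neq).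
Qed.

Lemma dist_step u v : (0 < d u v)%N -> exists w, e u w /\ d w v = (d u v).-1.
Proof.
case: (dist_spec u v) => [[|w p]] [pp lp sp]; first by rewrite -sp.
move=> _; exists w; move: pp => /= /andP [uw pw]; split=> //.
have h1 := dist_le' pw lp; have h2 := dist_triangle u w v.
have h3 := dist_edge uw; simpl in sp; lia.
Qed.

End Graph.

Section Tsp.
Variables (T : finType) (e : rel T).
Hypothesis e_sym : symmetric e.
Hypothesis e_irr : irreflexive e.
Hypothesis e_conn : forall u v : T, connect e u v.

Notation d := (dist e).

Lemma chain_walk (f : nat -> T) r : exists p,
  [/\ path e (f 0%N) p, last (f 0%N) p = f r,
      forall j, (j <= r)%N -> f j \in f 0%N :: p
    & size p = \sum_(j < r) d (f j) (f j.+1)].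
Proof.
elim: r => [|r [p [pp lp mp sp]]].
  exists [::]; split=> //; last by rewrite big_ord0.
  by move=> j; rewrite leqn0 => /eqP ->; rewrite mem_head.
case: (dist_spec e_conn (f r) (f r.+1)) => q [pq lq sq].
exists (p ++ q); split.
- by rewrite cat_path pp lp.
- by rewrite last_cat lp.
- move=> j; rewrite leq_eqVlt => /orP [/eqP ->|jr].
    have -> : f r.+1 = last (f 0%N) (p ++ q) by rewrite last_cat lp lq.
    exact: mem_last.
  by move: (mp j jr); rewrite !inE mem_cat => /orP [->|->] //; rewrite orbT.
- by rewrite size_cat big_ord_recr /= sp sq.
Qed.

Lemma closed_walk m (y : 'I_m.+1 -> T) : exists x p,
  [/\ path e x p, last x p = x, {subset [set y i | i in 'I_m.+1] <= x :: p}
    & size p = \sum_(i < m.+1) d (y i) (y (ordS i))].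
Proof.
pose f (j : nat) := y (inord j).
case: (chain_walk f m) => p [pp lp mp sp].
case: (dist_spec e_conn (f m) (f 0%N)) => q [pq lq sq].
exists (f 0%N), (p ++ q); split.
- by rewrite cat_path pp lp.
- by rewrite last_cat lp.
- move=> z /imsetP [i _ ->].
  have -> : y i = f i by rewrite /f inord_val.
  have := mp i; rewrite -ltnS ltn_ord => /(_ isT).
  by rewrite !inE mem_cat => /orP [->|->] //; rewrite orbT.
- rewrite size_cat sp sq big_ord_recr /=; congr (_ + _)%N.
    apply: eq_bigr => i _; rewrite /f; congr (d _ _); congr y; apply: val_inj.
      by rewrite /= inordK // ltnS ltnW.
    by rewrite /= inordK ?ltnS // modn_small // ltnS.
  rewrite /f; congr (d _ _); congr y; apply: val_inj; first by rewrite /= inordK.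
  by rewrite /= modnn inordK.
Qed.

Lemma tour_ex (S : {set T}) (x0 : T) : exists m x p,
  [/\ path e x p, last x p = x, {subset S <= x :: p} & size p = m].
Proof.
pose y (i : 'I_#|T|.+1) := nth x0 (enum T) i.
case: (closed_walk y) => x [p [pp lp mp sp]].
exists (size p), x, p; split=> // z _; apply: mp.
have zin : z \in enum T by rewrite mem_enum.
apply/imsetP; exists (inord (index z (enum T))) => //.
rewrite /y inordK; first by rewrite nth_index.
by rewrite ltnS cardT index_size.
Qed.

Lemma tsp_le_walk (S : {set T}) x p : path e x p -> last x p = x ->
  {subset S <= x :: p} -> (tsp e S <= size p)%N.
Proof.
move=> pp lp mp; have [_ H] := nat_min_spec (tour_ex S x).
by apply: H; exists x, p.
Qed.

Lemma tsp_le_cycle m (y : 'I_m.+1 -> T) (S : {set T}) :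
  S \subset [set y i | i in 'I_m.+1] ->
  (tsp e S <= \sum_(i < m.+1) d (y i) (y (ordS i)))%N.
Proof.
move=> /subsetP sub; case: (closed_walk y) => x [p [pp lp mp <-]].
by apply: (tsp_le_walk pp lp) => z /sub /mp.
Qed.

Lemma tsp_spec (S : {set T}) (x0 : T) : exists x p,
  [/\ path e x p, last x p = x, {subset S <= x :: p} & size p = tsp e S].
Proof. by have [H _] := nat_min_spec (tour_ex S x0). Qed.

Fixpoint psum (z : T) (r : seq T) : nat :=
  if r is y :: r' then (d z y + psum y r')%N else 0%N.

Definition lcyc (s : seq T) : nat :=
  if s is z :: r then psum z (rcons r z) else 0%N.

Lemma psum_rcons z r w : psum z (rcons r w) = (psum z r + d (last z r) w)%N.
Proof. by elim: r z => [|y r IH] z /=; rewrite ?addn0 ?IH ?addnA. Qed.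

Lemma psum_tri u y r : (psum u r <= d u y + psum y r)%N.
Proof.
case: r => [|z r] /=; first exact: leq0n.
by rewrite addnA leq_add2r (dist_triangle e_conn).
Qed.

Lemma walk_order p u : path e u p -> forall A : {set T}, {subset A <= u :: p} ->
  exists s, [/\ uniq s, s =i A & (psum u (rcons s (last u p)) <= size p)%N].
Proof.
elim: p u => [|y p IH] u /=.
  move=> _ A sub; exists (if u \in A then [:: u] else [::]); split.
  - by case: (u \in A).
  - move=> z; case uA: (u \in A); rewrite ?inE.
      by apply/eqP/idP => [->//|/sub]; rewrite inE => /eqP.
    apply/esym/negbTE/negP => zA; have := sub z zA; rewrite inE => /eqP zu.
    by move: zA; rewrite zu uA.
  - by case: (u \in A) => /=; rewrite !(dist0 e_conn).
move=> /andP [uy py] A sub.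
have sub' : {subset A :\ u <= y :: p}.
  move=> z; rewrite !inE => /andP [zu /sub]; rewrite inE (negbTE zu) //.
case: (IH y py _ sub') => s [us ms ps].
case uA: (u \in A).
- exists (u :: s); split.
  + by rewrite /= us andbT ms !inE eqxx.
  + move=> z; rewrite inE ms !inE; case: eqP => [->|] //=.
  + rewrite /= (dist0 e_conn); have := dist_edge e_conn uy; have := psum_tri u y (rcons s (last y p)).
    move: ps; rewrite add0n => ps h1 h2; apply: leq_trans h1 _.
    by rewrite -add1n leq_add.
- exists s; split=> //.
  + move=> z; rewrite ms !inE; case: eqP => [->|] //=; by rewrite uA.
  + have h2 := dist_edge e_conn uy; apply: leq_trans (psum_tri u y _) _.
    by rewrite -add1n leq_add.
Qed.


Lemma tsp_ge (S : {set T}) (x0 : T) :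
  exists s, [/\ uniq s, s =i S & (lcyc s <= tsp e S)%N].
Proof.
case: (tsp_spec S x0) => x [p [pp lp mp sp]].
case: (walk_order pp mp) => s [us ms ps]; exists s; split=> //.
rewrite -sp; apply: leq_trans ps; rewrite lp.
case: s {us ms} => [|z r] //=.
rewrite !psum_rcons addnCA leq_add2l.
have := dist_triangle e_conn (last z r) x z.
by rewrite (dist_sym e_sym e_conn x z) addnC.
Qed.

Definition Qs (S : {set T}) : nat := \sum_(u in S) \sum_(v in S) d u v.

Lemma sum_seq_set (s : seq T) (S : {set T}) (F : T -> nat) :
  uniq s -> s =i S -> (\sum_(u <- s) F u = \sum_(u in S) F u)%N.
Proof.
by move=> us ms; rewrite big_uniq //; apply: eq_bigl => u; rewrite -ms.
Qed.

Lemma Qs_seq (s : seq T) (S : {set T}) : uniq s -> s =i S ->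
  Qs S = (\sum_(u <- s) \sum_(v <- s) d u v)%N.
Proof.
move=> us ms; rewrite /Qs (sum_seq_set _ us ms); apply: eq_bigr => u _.
by rewrite (sum_seq_set _ us ms).
Qed.

Lemma psum_g (g : T -> nat) (hg : forall u v, u != v -> 2 * d u v = g u + g v) z r :
  uniq (z :: r) -> (2 * psum z r + g (last z r) = g z + 2 * \sum_(y <- r) g y)%N.
Proof.
elim: r z => [|y r IH] z /=; first by rewrite big_nil; lia.
rewrite inE negb_or => /andP [/andP [zy zr] /andP [yr ur]].
have := IH y; rewrite /= yr ur => /(_ isT) H.
have := hg z y zy; rewrite big_cons; lia.
Qed.

Lemma lcyc_g (g : T -> nat) (hg : forall u v, u != v -> 2 * d u v = g u + g v) s :
  uniq s -> (2 <= size s)%N -> lcyc s = (\sum_(y <- s) g y)%N.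
Proof.
case: s => [|z [|y r]] //= us _.
rewrite psum_rcons big_cons.
have := psum_g hg us.
have lz : last y r != z.
  move: us; rewrite /= => /andP [zyr _]; apply/eqP => lz; move: zyr.
  by rewrite -lz mem_last.
have := hg _ _ lz; rewrite /=; set l := last y r; lia.
Qed.

Lemma Qs_g (g : T -> nat) (S : {set T})
  (hg : forall u v, u != v -> 2 * d u v = g u + g v) :
  (Qs S * 2 = 2 * (#|S| - 1) * \sum_(u in S) g u)%N.
Proof.
rewrite /Qs big_distrl /=.
have H1 : forall u, u \in S ->
   ((\sum_(v in S) d u v) * 2 = (#|S| - 1) * g u + \sum_(v in S :\ u) g v)%N.
  move=> u uS; rewrite big_distrl /= (bigD1 u) //= (dist0 e_conn) mul0n add0n.
  rewrite (eq_bigl (fun v => v \in S :\ u)); last first.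
    by move=> v; rewrite !inE andbC.
  rewrite (eq_bigr (fun v => g u + g v)%N); last first.
    by move=> v; rewrite !inE => /andP [vu _]; rewrite mulnC hg // eq_sym.
  rewrite big_split /= sum_nat_const; congr (_ + _)%N.
  by rewrite [in RHS](cardsD1 u S) uS add1n subn1.
have H2 : forall u, u \in S ->
   (\sum_(v in S :\ u) g v + g u = \sum_(v in S) g v)%N.
  move=> u uS; rewrite [RHS](bigD1 u) //= addnC; congr (_ + _)%N.
  by apply: eq_bigl => v; rewrite !inE andbC.
rewrite (eq_bigr _ H1) big_split /= -big_distrr /=.
have H3 : (\sum_(u in S) \sum_(v in S :\ u) g v + \sum_(u in S) g u
          = #|S| * \sum_(u in S) g u)%N.
  by rewrite -big_split /= (eq_bigr _ H2) sum_nat_const.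
case: #|S| H3 => [|c] /=; first by lia.
rewrite subSS subn0 mulSn; lia.
Qed.

Lemma lcyc_Qs_g (g : T -> nat) (S : {set T}) s
  (hg : forall u v, u != v -> 2 * d u v = g u + g v) :
  uniq s -> s =i S -> (2 <= size s)%N -> (lcyc s * (#|S| - 1) = Qs S)%N.
Proof.
move=> us ms ss; have := Qs_g S hg.
rewrite (lcyc_g hg us ss) (sum_seq_set _ us ms).
lia.
Qed.

Lemma lcyc_Qs_small (S : {set T}) s :
  uniq s -> s =i S -> size s = 2%N \/ size s = 3%N ->
  (lcyc s * (#|S| - 1) = Qs S)%N.
Proof.
move=> us ms ss; rewrite (Qs_seq us ms).
have cS : #|S| = size s by rewrite -(eq_card ms); apply/card_uniqP.
rewrite cS.
have ds := dist_sym e_sym e_conn; have d0 := dist0 e_conn.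
case: s us ms ss {cS} => [|a [|b [|c [|x r]]]] //= us ms ss; try by case: ss.
  rewrite !big_cons !big_nil /= !d0 (ds b a); lia.
rewrite !big_cons !big_nil /= !d0 (ds b a) (ds c a) (ds c b); lia.
Qed.

End Tsp.

Lemma perm_pair_sum m (g : 'I_m -> 'I_m -> nat) (i j i' j' : 'I_m) :
  i != j -> i' != j' ->
  (\sum_(s : 'S_m) g (s i) (s j) = \sum_(s : 'S_m) g (s i') (s j'))%N.
Proof.
move=> ij ij'.
pose j1 := tperm i' i j'.
pose p : 'S_m := (tperm i' i * tperm j1 j)%g.
have j1i : j1 != i.
  by apply/eqP => h; move: ij'; rewrite -(inj_eq (@perm_inj _ (tperm i' i))) -/j1 h tpermL eqxx.
have pi' : p i' = i by rewrite permM tpermL tpermD // eq_sym.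
have pj' : p j' = j by rewrite permM -/j1 tpermL.
rewrite [RHS](reindex_inj (mulgI p)) /=; apply: eq_bigr => s _.
by rewrite (permM p s i') (permM p s j') pi' pj'.
Qed.

Lemma sum_neq_const m (i : 'I_m) c :
  (\sum_(j < m) (j != i) * c = (m - 1) * c)%N.
Proof.
rewrite (bigD1 i) //= eqxx mul0n add0n.
rewrite (eq_bigr (fun _ => c)); last by move=> j ->; rewrite mul1n.
rewrite (eq_bigl (fun j => j \in [set~ i])); last by move=> j; rewrite !inE.
by rewrite sum_nat_const cardsC1 card_ord subn1.
Qed.

Lemma perm_pair_avg m (g : 'I_m -> 'I_m -> nat) (i j : 'I_m) : i != j ->
  ((\sum_(s : 'S_m) g (s i) (s j)) * (m * (m - 1)) =
    m`! * \sum_(a < m) \sum_(b < m) (a != b) * g a b)%N.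
Proof.
move=> ij.
pose h (a b : 'I_m) := ((a != b) * g a b)%N.
have E1 : (\sum_(i' < m) \sum_(j' < m) \sum_(s : 'S_m) h (s i') (s j') =
           m`! * \sum_(a < m) \sum_(b < m) h a b)%N.
  rewrite (eq_bigr (fun i' => \sum_(s : 'S_m) \sum_(j' < m) h (s i') (s j')));
    last by move=> i' _; rewrite exchange_big.
  rewrite exchange_big /=.
  rewrite (eq_bigr (fun _ => \sum_(a < m) \sum_(b < m) h a b)); last first.
    move=> s _.
    rewrite [RHS](reindex_inj (@perm_inj _ s)) /=; apply: eq_bigr => a _.
    by rewrite [RHS](reindex_inj (@perm_inj _ s)).
  by rewrite sum_nat_const card_Sn.
have E2 : forall i' j' : 'I_m, (\sum_(s : 'S_m) h (s i') (s j') =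
      (j' != i') * \sum_(s : 'S_m) g (s i) (s j))%N.
  move=> i' j'; case: (eqVneq j' i') => [->|ji] /=.
    by rewrite mul0n; apply: big1 => s _; rewrite /h eqxx.
  have ij' : i' != j' by rewrite eq_sym.
  rewrite mul1n (perm_pair_sum g ij ij').
  by apply: eq_bigr => s _; rewrite /h (inj_eq perm_inj) eq_sym ji mul1n.
rewrite -E1 [RHS](eq_bigr (fun i' : 'I_m => (m - 1) * \sum_(s : 'S_m) g (s i) (s j))%N).
  by rewrite sum_nat_const card_ord mulnC mulnA.
by move=> i' _; rewrite -(sum_neq_const i'); apply: eq_bigr => j' _; rewrite E2.
Qed.

Lemma sum_eq_le (I : finType) (f g : I -> nat) :
  (forall i, f i <= g i)%N -> (\sum_i f i = \sum_i g i)%N -> forall i, f i = g i.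
Proof.
move=> le eq i.
have : (\sum_i (g i - f i) == 0)%N.
  have : (\sum_i g i = \sum_i f i + \sum_i (g i - f i))%N.
    by rewrite -big_split /=; apply: eq_bigr => k _; rewrite subnKC.
  by rewrite -eq => /eqP; rewrite -{1}[X in X == _]addn0 eqn_add2l eq_sym.
rewrite sum_nat_eq0 => /forallP /(_ i) /=; have := le i; lia.
Qed.

Section Avg.
Variables (T : finType) (e : rel T).
Hypothesis e_sym : symmetric e.
Hypothesis e_irr : irreflexive e.
Hypothesis e_conn : forall u v : T, connect e u v.

Notation d := (dist e).

Definition Lp m (x : 'I_m -> T) (s : 'S_m) : nat :=
  \sum_(i < m) d (x (s i)) (x (s (ordS i))).

Lemma ordS_neq m (i : 'I_m.+2) : ordS i != i.
Proof.
apply/eqP => /(congr1 val) /=; case: (ltngtP i.+1 m.+2) => h.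
- by rewrite modn_small //; lia.
- by have := ltn_ord i; lia.
- by rewrite h modnn => E; move: h; rewrite -E.
Qed.

Lemma sumL m (x : 'I_m.+2 -> T) :
  ((\sum_(s : 'S_m.+2) Lp x s) * m.+1 = (m.+2)`! * \sum_(a < m.+2) \sum_(b < m.+2) d (x a) (x b))%N.
Proof.
have H : ((\sum_(s : 'S_m.+2) Lp x s) * (m.+2 * (m.+2 - 1)) =
   m.+2 * ((m.+2)`! * \sum_(a < m.+2) \sum_(b < m.+2) d (x a) (x b)))%N.
  rewrite /Lp exchange_big big_distrl /=.
  rewrite (eq_bigr (fun _ => (m.+2)`! * \sum_(a < m.+2) \sum_(b < m.+2) d (x a) (x b))%N).
    by rewrite sum_nat_const card_ord.
  move=> i _; rewrite (perm_pair_avg (fun a b => d (x a) (x b)) (_ : i != ordS i)); last by rewrite eq_sym ordS_neq.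
  by congr (_ * _)%N; apply: eq_bigr => a _; apply: eq_bigr => b _;
    case: eqVneq => [->|]; rewrite ?mul1n ?mul0n ?dist0.
move: H; rewrite subn1 /= mulnCA => /eqP; rewrite eqn_pmul2l // => /eqP.
by rewrite mulnC.
Qed.

Lemma tsp_le_Lp m (x : 'I_m.+1 -> T) (s : 'S_m.+1) :
  (tsp e [set x i | i in 'I_m.+1] <= Lp x s)%N.
Proof.
rewrite /Lp; apply: (tsp_le_cycle e_conn (y := fun i => x (s i))).
apply/subsetP => z /imsetP [i _ ->]; apply/imsetP; exists (s^-1 i)%g => //.
by rewrite permKV.
Qed.

Lemma Qs_img m (x : 'I_m -> T) : injective x ->
  Qs e [set x i | i in 'I_m] = (\sum_(a < m) \sum_(b < m) d (x a) (x b))%N.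
Proof.
move=> xinj; rewrite /Qs big_imset /=; last by move=> a b _ _; apply: xinj.
apply: eq_bigr => a _; rewrite big_imset //=.
by move=> ? ? _ _; apply: xinj.
Qed.

Lemma tsp_sum_le m (x : 'I_m.+1 -> T) :
  ((m.+1)`! * tsp e [set x i | i in 'I_m.+1] <= \sum_(s : 'S_m.+1) Lp x s)%N.
Proof.
rewrite -card_Sn -sum_nat_const; apply: leq_sum => s _; exact: tsp_le_Lp.
Qed.

Lemma tsp_avg m (x : 'I_m.+2 -> T) : injective x ->
  (tsp e [set x i | i in 'I_m.+2] * m.+1 <= Qs e [set x i | i in 'I_m.+2])%N.
Proof.
move=> xinj; rewrite (Qs_img xinj).
rewrite -(@leq_pmul2l (m.+2)`!) ?fact_gt0 // -sumL.
by rewrite mulnA leq_mul2r tsp_sum_le orbT.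
Qed.

Lemma tsp_avg_eq m (x : 'I_m.+2 -> T) : injective x ->
  (tsp e [set x i | i in 'I_m.+2] * m.+1 = Qs e [set x i | i in 'I_m.+2])%N ->
  forall s, Lp x s = tsp e [set x i | i in 'I_m.+2].
Proof.
move=> xinj; rewrite (Qs_img xinj) => H.
have H2 : ((m.+2)`! * tsp e [set x i | i in 'I_m.+2] = \sum_(s : 'S_m.+2) Lp x s)%N.
  apply/eqP; rewrite -(@eqn_pmul2r m.+1) // sumL -H mulnA //.
have H3 := sum_eq_le (f := fun _ => tsp e [set x i | i in 'I_m.+2]) (g := Lp x).
move=> s; symmetry; apply: H3; first by move=> t; exact: tsp_le_Lp.
by rewrite -H2 sum_nat_const card_Sn.
Qed.

Lemma four_pt m (x : 'I_m.+4 -> T) c : (forall s, Lp x s = c) ->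
  (d (x (inord 0)) (x (inord 1)) + d (x (inord 2)) (x (inord 3)) =
   d (x (inord 0)) (x (inord 2)) + d (x (inord 1)) (x (inord 3)))%N.
Proof.
move=> H.
set i0 : 'I_m.+4 := inord 0; set i1 : 'I_m.+4 := inord 1.
set i2 : 'I_m.+4 := inord 2; set i3 : 'I_m.+4 := inord 3.
have v0 : val i0 = 0%N by rewrite /= inordK.
have v1 : val i1 = 1%N by rewrite /= inordK.
have v2 : val i2 = 2%N by rewrite /= inordK.
have v3 : val i3 = 3%N by rewrite /= inordK.
have S0 : ordS i0 = i1 by apply: val_inj; rewrite /= v0 v1 modn_small.
have S1 : ordS i1 = i2 by apply: val_inj; rewrite /= v1 v2 modn_small.
have S2 : ordS i2 = i3 by apply: val_inj; rewrite /= v2 v3 modn_small.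
have n01 : i0 != i1 by rewrite -val_eqE v0 v1.
have n02 : i0 != i2 by rewrite -val_eqE v0 v2.
have n12 : i1 != i2 by rewrite -val_eqE v1 v2.
pose F (s : 'S_m.+4) i := d (x (s i)) (x (s (ordS i))).
have D : forall s, Lp x s = (F s i0 + F s i1 + F s i2 +
    \sum_(i < m.+4 | (i != i0) && (i != i1) && (i != i2)) F s i)%N.
  move=> s; rewrite /Lp (bigD1 i0) //= (bigD1 i1) /=; last by rewrite eq_sym n01.
  rewrite (bigD1 i2) /=; last by rewrite eq_sym n02 eq_sym n12.
  by rewrite !addnA.
pose t := tperm i1 i2.
have R : (\sum_(i < m.+4 | (i != i0) && (i != i1) && (i != i2)) F 1%g i =
          \sum_(i < m.+4 | (i != i0) && (i != i1) && (i != i2)) F t i)%N.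
  apply: eq_bigr => i /andP [/andP [ni0 ni1] ni2]; rewrite /F !perm1.
  have si1 : ordS i != i1 by rewrite -S0 (inj_eq (@ordS_inj _)).
  have si2 : ordS i != i2 by rewrite -S1 (inj_eq (@ordS_inj _)).
  by rewrite /t !tpermD // eq_sym.
have n31 : i1 != i3 by rewrite -val_eqE v3 v1.
have n32 : i2 != i3 by rewrite -val_eqE v3 v2.
have E1 := H 1%g; have E2 := H t; rewrite D in E1; rewrite D -R in E2.
move: E1 E2; rewrite /F !perm1 S0 S1 S2 /t tpermL tpermR (@tpermD _ i1 i2 i0) 1?eq_sym // 1?eq_sym //.
rewrite (tpermD n31 n32) (dist_sym e_sym e_conn (x i2) (x i1)).
lia.
Qed.

End Avg.

Section FP.
Variables (T : finType) (e : rel T).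
Hypothesis e_sym : symmetric e.
Hypothesis e_irr : irreflexive e.
Hypothesis e_conn : forall u v : T, connect e u v.

Notation d := (dist e).

Definition FourPt := forall a b c w : T, uniq [:: a; b; c; w] ->
  (d a b + d c w = d a c + d b w)%N.

Lemma edge_neq u v : e u v -> u != v.
Proof. by move=> uv; apply/eqP => E; move: uv; rewrite E e_irr. Qed.

Lemma d_pos u v : u != v -> (0 < d u v)%N.
Proof.
move=> uv; rewrite lt0n; apply/eqP => /(dist_eq0 e_conn) E; by rewrite E eqxx in uv.
Qed.

Lemma d2_noedge u v : d u v = 2%N -> ~~ e u v.
Proof. by move=> H; apply/negP => /(dist_edge e_conn); rewrite H. Qed.

Lemma fp_diam : FourPt -> forall u v, (d u v <= 2)%N.
Proof.
move=> fp a c; rewrite leqNgt; apply/negP => D3.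
have [b [ab bc]] := dist_step e_conn (ltnW (ltnW D3)).
have bc0 : (0 < d b c)%N by rewrite bc; lia.
have [b' [bb' b'c]] := dist_step e_conn bc0.
have dab := dist_edgeE e_conn (edge_neq ab) ab.
have dbb' := dist_edgeE e_conn (edge_neq bb') bb'.
have t1 := dist_triangle e_conn a b b'.
have t2 := dist_triangle e_conn a b' c.
have dab' : d a b' = 2%N by lia.
have ne : forall u v, d u v != 0%N -> u != v.
  by move=> u v; apply: contra => /eqP ->; rewrite (dist0 e_conn).
have U : uniq [:: a; b; b'; c].
  rewrite /= !inE !negb_or (edge_neq ab) (edge_neq bb') !ne ?dab' //; lia.
have := fp _ _ _ _ U; lia.
Qed.

Lemma fp_mid : FourPt -> forall a b c, d a c = 2%N -> e a b -> e b c ->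
  forall x, x != a -> x != b -> x != c ->
  [/\ e b x, d a x = 2%N & d c x = 2%N].
Proof.
move=> fp a b c ac ab bc x xa xb xc.
have dab := dist_edgeE e_conn (edge_neq ab) ab.
have dbc := dist_edgeE e_conn (edge_neq bc) bc.
have ac' : a != c by apply/eqP => E; rewrite E (dist0 e_conn) in ac.
have U1 : uniq [:: a; b; c; x].
  by rewrite /= !inE !negb_or (edge_neq ab) ac' (edge_neq bc) !(eq_sym _ x) xa xb xc.
have U2 : uniq [:: a; x; c; b].
  rewrite /= !inE !negb_or (edge_neq ab) ac' !(eq_sym _ x) xa xb xc /=.
  by rewrite eq_sym (edge_neq bc).
have F1 := fp _ _ _ _ U1; have F2 := fp _ _ _ _ U2.
have D1 := fp_diam fp c x; have D2 : (0 < d b x)%N by apply: d_pos; rewrite eq_sym.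
rewrite (dist_sym e_sym e_conn c b) (dist_sym e_sym e_conn x b) in F2.
have dbx : d b x = 1%N by lia.
split; [exact: dist1_edge | lia | lia].
Qed.

Lemma fp_graph : FourPt -> is_star e \/ is_complete e.
Proof.
move=> fp.
case: (boolP [forall u, forall v, (u != v) ==> e u v]) => [/forallP H|].
  by right => u v uv; have /forallP /(_ v) := H u; rewrite uv.
rewrite negb_forall => /existsP [a]; rewrite negb_forall => /existsP [c].
rewrite negb_imply => /andP [ac nac].
have dac : d a c = 2%N.
  have := fp_diam fp a c; have := d_pos ac.
  case E: (d a c) => [|[|[|]]] //.
  by move: nac; rewrite (dist1_edge e_conn E).
have [b [ab bc']] := dist_step e_conn (d_pos ac).
have bc : e b c by apply: (dist1_edge e_conn); rewrite bc' dac.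
have B : forall y, y != b -> e b y.
  move=> y yb; case: (eqVneq y a) => [->|ya]; first by rewrite e_sym.
  case: (eqVneq y c) => [->|yc] //.
  by case: (fp_mid fp dac ab bc ya yb yc).
have H1 : forall z, z != b -> z != a -> d a z = 2%N.
  move=> z zb za; case: (eqVneq z c) => [->|zc] //.
  by case: (fp_mid fp dac ab bc za zb zc).
have H2 : forall y z, y != b -> z != b -> y != z -> d y z = 2%N.
  move=> y z yb zb yz; case: (eqVneq y a) yb yz => [->|ya] yb yz; first by apply: H1 => //; rewrite eq_sym.
  have ay := H1 _ yb ya.
  case: (eqVneq z a) yz => [->|za] yz; first by rewrite (dist_sym e_sym e_conn).
  have zy : z != y by rewrite eq_sym.
  by case: (fp_mid fp ay ab (B _ yb) za zb zy).
left; exists b => u v uv; split.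
  move=> uv'; apply/negPn/negP; rewrite negb_or => /andP [ub vb].
  by move: (d2_noedge (H2 _ _ ub vb uv)); rewrite uv'.
case/orP => /eqP E; move: uv; rewrite E => uv.
  by apply: B; rewrite eq_sym.
by rewrite e_sym; apply: B.
Qed.

Lemma star_g : is_star e -> exists g : T -> nat,
  forall u v, u != v -> (2 * d u v = g u + g v)%N.
Proof.
case=> c H; exists (fun u => if u == c then 0%N else 2%N) => u v uv.
have dc : forall w, w != c -> d c w = 1%N.
  move=> w wc; apply: (dist_edgeE e_conn); first by rewrite eq_sym.
  by apply/(H c w); rewrite ?eqxx // eq_sym.
case: (eqVneq u c) uv => [->|uc] uv.
  have vc : v != c by rewrite eq_sym.
  by rewrite dc // (negbTE vc).
case: (eqVneq v c) uv => [->|vc] uv.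
  by rewrite (dist_sym e_sym e_conn) dc // (negbTE uc).
have ne : ~~ e u v by apply/negP => /(H u v uv); rewrite (negbTE uc) (negbTE vc).
have t := dist_triangle e_conn u c v.
rewrite (dist_sym e_sym e_conn u c) !dc // in t.
have p := d_pos uv.
have n1 : d u v != 1%N by apply: contraNneq ne => /(dist1_edge e_conn).
lia.
Qed.

Lemma complete_g : is_complete e -> exists g : T -> nat,
  forall u v, u != v -> (2 * d u v = g u + g v)%N.
Proof.
move=> H; exists (fun _ => 1%N) => u v uv.
by rewrite (dist_edgeE e_conn uv (H u v uv)).
Qed.

End FP.

Lemma sum_cond_mul (I : finType) (P : pred I) (F : I -> nat) :
  (\sum_(i | P i) F i = \sum_i P i * F i)%N.
Proof. by rewrite big_mkcond; apply: eq_bigr => i _; case: (P i); rewrite ?mul1n. Qed.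

Lemma count_pairs (T : finType) (k : nat) (u v : T) : u != v ->
  #|[set S : {set T} | (#|S| == k.+2) && (u \in S) && (v \in S)]| = 'C(#|T| - 2, k).
Proof.
move=> uv.
pose A := ~: [set u; v].
have cA : #|A| = (#|T| - 2)%N.
  by rewrite cardsCs setCK cards2 uv.
rewrite -cA -cards_draws.
pose f (B : {set T}) := B :|: [set u; v].
have finj : {in [set B : {set T} | B \subset A & #|B| == k] &, injective f}.
  move=> B1 B2; rewrite !inE => /andP [s1 _] /andP [s2 _] E.
  have -> : B1 = f B1 :\: [set u; v].
    by rewrite /f setDUl setDv setU0; apply/esym/setDidPl; rewrite disjoints_subset.
  by rewrite E /f setDUl setDv setU0; apply/setDidPl; rewrite disjoints_subset.
rewrite -(card_in_imset finj); apply: eq_card => S; rewrite inE.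
apply/idP/imsetP.
- move=> /andP [/andP [cS uS] vS]; exists (S :\: [set u; v]).
    rewrite inE {1}setDE subsetIr /=.
    have : #|S| = (#|S :\: [set u; v]| + #|S :&: [set u; v]|)%N by rewrite addnC cardsID.
    have -> : S :&: [set u; v] = [set u; v].
      by apply/setIidPr/subsetP => z; rewrite !inE => /orP [] /eqP ->.
    rewrite cards2 uv (eqP cS) => E; apply/eqP; lia.
  apply/setP => z; rewrite /f !inE.
  case zS: (z \in S); first by rewrite andbT; case: (z == u); case: (z == v).
  have zu : z != u by apply: contraFneq zS => ->.
  have zv : z != v by apply: contraFneq zS => ->.
  by rewrite (negbTE zu) (negbTE zv).
- move=> [B]; rewrite inE => /andP [sB cB] ->; rewrite /f !inE eqxx orbT andbT.
  rewrite cardsU (cards2 u v) uv.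
  have -> : B :&: [set u; v] = set0.
    by apply/disjoint_setI0; rewrite disjoints_subset.
  by rewrite cards0 subn0 (eqP cB) addn2 eqxx /= eqxx !orbT.
Qed.

Section Sums.
Variables (T : finType) (e : rel T).
Hypothesis e_sym : symmetric e.
Hypothesis e_conn : forall u v : T, connect e u v.
Notation d := (dist e).

Lemma wiener2 : (\sum_u \sum_v d u v = 2 * Wiener e)%N.
Proof.
rewrite /Wiener mul2n -addnn.
have H : forall u v, d u v = ((enum_rank u < enum_rank v) * d u v +
                              (enum_rank v < enum_rank u) * d u v)%N.
  move=> u v; case: (ltngtP (enum_rank u) (enum_rank v)) => //=; rewrite ?mul1n ?mul0n ?addn0 //.
  by move=> /val_inj /enum_rank_inj ->; rewrite (dist0 e_conn).
rewrite (eq_bigr (fun u => \sum_v ((enum_rank u < enum_rank v) * d u v +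
                              (enum_rank v < enum_rank u) * d u v)%N)); last first.
  by move=> u _; apply: eq_bigr => v _; rewrite -H.
under eq_bigr => u _ do rewrite big_split /=.
rewrite big_split /=; congr (_ + _)%N.
  by apply: eq_bigr => u _; rewrite [RHS]sum_cond_mul.
rewrite exchange_big /=; apply: eq_bigr => u _; rewrite [RHS]sum_cond_mul.
by apply: eq_bigr => v _; rewrite (dist_sym e_sym e_conn).
Qed.

Lemma sum_Qs k : (\sum_(S : {set T} | #|S| == k.+2) Qs e S =
   'C(#|T| - 2, k) * \sum_u \sum_v d u v)%N.
Proof.
rewrite /Qs.
have E : forall S : {set T}, (\sum_(u in S) \sum_(v in S) d u v =
   \sum_u \sum_v ((u \in S) && (v \in S)) * d u v)%N.
  move=> S; rewrite sum_cond_mul; apply: eq_bigr => u _.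
  rewrite sum_cond_mul big_distrr /=; apply: eq_bigr => v _.
  by case: (u \in S); case: (v \in S); rewrite ?mul1n ?mul0n.
rewrite (eq_bigr _ (fun S _ => E S)) exchange_big big_distrr /=.
apply: eq_bigr => u _; rewrite exchange_big big_distrr /=; apply: eq_bigr => v _.
case: (eqVneq u v) => [->|uv].
  by rewrite (dist0 e_conn) muln0 big1 // => S _; rewrite muln0.
rewrite -big_distrl /= -(count_pairs k uv); congr (_ * _)%N.
rewrite -sum1_card big_mkcond /= [RHS]big_mkcond /=; apply: eq_bigr => S _.
by rewrite !inE; case: (#|S| == k.+2); case: (u \in S); case: (v \in S).
Qed.

End Sums.

Section Main.
Variables (T : finType) (e : rel T).
Hypothesis e_sym : symmetric e.
Hypothesis e_irr : irreflexive e.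
Hypothesis e_conn : forall u v : T, connect e u v.
Notation d := (dist e).

Lemma set_ord (S : {set T}) m : #|S| = m.+1 ->
  exists x : 'I_m.+1 -> T, injective x /\ [set x i | i in 'I_m.+1] = S.
Proof.
move=> cS; have : (0 < #|S|)%N by rewrite cS.
case/card_gt0P => x0 _.
have sz : size (enum S) = m.+1 by rewrite -cardE.
exists (fun i => nth x0 (enum S) i); split.
  move=> i j /eqP; rewrite nth_uniq ?sz ?enum_uniq // => /eqP; exact: val_inj.
apply/setP => z; apply/imsetP/idP => [[i _ ->]|zS].
  by rewrite -mem_enum mem_nth ?sz.
have zi : (index z (enum S) < m.+1)%N by rewrite -sz index_mem mem_enum.
by exists (Ordinal zi) => //=; rewrite nth_index ?mem_enum.
Qed.

Lemma S_le k (S : {set T}) : #|S| = k.+2 -> (tsp e S * k.+1 <= Qs e S)%N.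
Proof.
case/set_ord => x [xinj <-]; exact: tsp_avg.
Qed.

Lemma S_ge (S : {set T}) :
  (#|S| = 2 \/ #|S| = 3 \/ (2 <= #|S| /\ exists g : T -> nat,
       forall u v, u != v -> 2 * d u v = g u + g v))%N ->
  (Qs e S <= tsp e S * (#|S| - 1))%N.
Proof.
move=> H.
have : (0 < #|S|)%N by case: H => [->|[->|[h _]]] //; apply: leq_trans h.
case/card_gt0P => x0 _.
case: (tsp_ge e_sym e_conn S x0) => s [us ms ls].
have cS : #|S| = size s by rewrite -(eq_card ms); apply/card_uniqP.
have E : (lcyc e s * (#|S| - 1) = Qs e S)%N.
  case: H => [h|[h|[h [g hg]]]].
  - by apply: (lcyc_Qs_small e_sym e_conn us ms); left; rewrite -cS.
  - by apply: (lcyc_Qs_small e_sym e_conn us ms); right; rewrite -cS.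
  - by apply: (lcyc_Qs_g e_conn hg us ms); rewrite -cS.
by rewrite -E leq_mul2r ls orbT.
Qed.

Lemma nat_ineq k : (Wtsp e k.+2 * k.+1 <= 'C(#|T| - 2, k) * (2 * Wiener e))%N.
Proof.
rewrite -(wiener2 e_sym e_conn) -(sum_Qs e_conn) /Wtsp big_distrl /=.
by apply: leq_sum => S /eqP cS; apply: S_le.
Qed.

Lemma nat_eq_iff k : (Wtsp e k.+2 * k.+1 = 'C(#|T| - 2, k) * (2 * Wiener e))%N <->
  (forall S : {set T}, #|S| = k.+2 -> tsp e S * k.+1 = Qs e S)%N.
Proof.
rewrite -(wiener2 e_sym e_conn) -(sum_Qs e_conn) /Wtsp big_distrl /=.
split=> [H S cS|H]; last by apply: eq_bigr => S /eqP; apply: H.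
have := @sum_eq_le _ (fun S : {set T} => if #|S| == k.+2 then (tsp e S * k.+1)%N else 0%N)
                  (fun S : {set T} => if #|S| == k.+2 then Qs e S else 0%N).
move=> /(_ _ _ S); rewrite cS eqxx; apply.
  by move=> S'; case: eqP => // /eqP c; apply: S_le; apply/eqP.
by rewrite -!big_mkcond.
Qed.

Lemma fourpt_of k (hkn : (k.+4 <= #|T|)%N) :
  (forall S : {set T}, #|S| = k.+4 -> tsp e S * k.+3 = Qs e S)%N -> FourPt e.
Proof.
move=> H a b c w U.
pose L := [:: a; b; c; w] ++ [seq y <- enum T | y \notin [:: a; b; c; w]].
have uL : uniq L.
  rewrite cat_uniq U filter_uniq ?enum_uniq // andbT.
  by apply/hasPn => y; rewrite mem_filter => /andP [].
have sL : (#|T| <= size L)%N.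
  rewrite -(card_uniqP uL); apply: subset_leq_card; apply/subsetP => y _.
  rewrite /L mem_cat mem_filter mem_enum andbT.
  by case: (y \in [:: a; b; c; w]).
pose s := take k.+4 L.
have ss : size s = k.+4 by rewrite size_takel //; apply: leq_trans hkn sL.
have us : uniq s by apply: take_uniq.
pose x (i : 'I_k.+4) := nth a s i.
have xinj : injective x.
  by move=> i j /eqP; rewrite /x nth_uniq ?ss // => /eqP; apply: val_inj.
have cS : #|[set x i | i in 'I_k.+4]| = k.+4 by rewrite card_imset // card_ord.
have Lp_eq := tsp_avg_eq e_conn xinj (H _ cS).
have := four_pt e_sym e_conn Lp_eq.
by rewrite /x !inordK // !nth_take.
Qed.

Lemma char k (hkn : (k.+2 <= #|T|)%N) :
  (forall S : {set T}, #|S| = k.+2 -> tsp e S * k.+1 = Qs e S)%N <->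
  [\/ k.+2 = 2%N, k.+2 = 3%N | (3 < k.+2)%N /\ (is_star e \/ is_complete e)].
Proof.
split=> [H|H S cS].
  case: k hkn H => [|[|k]] hkn H; [by constructor 1|by constructor 2|constructor 3].
  split=> //; apply: (fp_graph e_sym e_irr e_conn); exact: fourpt_of hkn H.
apply/eqP; rewrite eqn_leq S_le //=.
have := S_ge (S := S); rewrite cS subSS subn0; apply.
case: H => [h|h|[_ [/(star_g e_sym e_conn) [g hg]|/(complete_g e_conn) [g hg]]]].
- by left.
- by right; left.
- by right; right; split=> //; exists g.
- by right; right; split=> //; exists g.
Qed.

End Main.

Unset Implicit Arguments.
Local Open Scope ring_scope.

Lemma bin_id n k : (k.+2 <= n)%N ->
  ((k.+2 * 'C(n, k.+2)) * k.+1 = 'C(n - 2, k) * ('C(n, 2) * 2))%N.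
Proof.
case: n => [|[|n]] // _; rewrite !subSS subn0.
have h1 := mul_bin_diag n.+2 k.+1; have h2 := mul_bin_diag n.+1 k.
have h3 := mul_bin_diag n.+2 1; rewrite bin1 /= in h3; simpl in h1, h2.
rewrite -h1 -mulnA [X in (_ * X)%N]mulnC -h2 mulnA h3 mulnC mulnC; ring.
Qed.

Theorem theorem3 (T : finType) (e : rel T)
  (e_sym : symmetric e) (e_irr : irreflexive e)
  (e_conn : forall u v : T, connect e u v)
  (k : nat) (hk : (2 <= k)%N) (hkn : (k <= #|T|)%N) :
  [/\ ((Wtsp e k)%:R : rat) <= (k * 'C(#|T|, k))%:R * mu e,
      (k * 'C(#|T|, k))%:R * mu e
        = 2%:R / (k.-1)%:R * ('C(#|T|.-2, k.-2))%:R * (Wiener e)%:R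
    & (((Wtsp e k)%:R : rat) = (k * 'C(#|T|, k))%:R * mu e
        <-> [\/ k = 2%N, k = 3%N | (3 < k)%N /\ (is_star e \/ is_complete e)])].
Proof.
case: k hk hkn => [|[|k]] // _ hkn.
have hid := @bin_id _ _ hkn.
have ineq := nat_ineq e_sym e_conn k.
have eqiff := nat_eq_iff e_sym e_conn k.
have ch := char e_sym e_irr e_conn hkn.
set N := Wtsp e k.+2 in ineq eqiff *; set W := Wiener e in ineq eqiff *.
set K := (k.+2 * 'C(#|T|, k.+2))%N in hid *.
set C2 := 'C(#|T|, 2) in hid *.
set C' := 'C(#|T| - 2, k) in hid ineq eqiff.
have C2pos : (0 < C2)%N by rewrite bin_gt0; apply: leq_trans hkn.
have muE : mu e = W%:R / C2%:R by [].
have natE : (N * C2 = K * W)%N <-> (N * k.+1 = C' * (2 * W))%N.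
  split=> H.
    apply/eqP; rewrite -(@eqn_pmul2r (C2 * 2)) ?muln_gt0 ?C2pos //; apply/eqP.
    nia.
  apply/eqP; rewrite -(@eqn_pmul2r (2 * k.+1)) ?muln_gt0 //; apply/eqP.
  nia.
split.
- rewrite muE mulrA ler_pdivlMr ?ltr0n // -!natrM ler_nat.
  rewrite -(@leq_pmul2r (2 * k.+1)) ?muln_gt0 //.
  nia.
- rewrite muE /= -subn2 -/C'.
  have KE : (K%:R : rat) = C'%:R * C2%:R * 2 / k.+1%:R.
    apply: (@mulIf _ k.+1%:R); first by rewrite pnatr_eq0.
    by rewrite mulfVK ?pnatr_eq0 // -!natrM hid mulnA.
  rewrite KE; field.
  by rewrite addrC natr1 !pnatr_eq0 /= -lt0n C2pos.
- rewrite -ch -eqiff -natE muE.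
  have C2nz : (C2%:R : rat) != 0 by rewrite pnatr_eq0 -lt0n.
  split=> H.
    apply/eqP; rewrite -(eqr_nat rat) [X in X == _]natrM [X in _ == X]natrM H.
    by rewrite -mulrA divfK.
  apply: (mulIf C2nz); rewrite -natrM H natrM -mulrA divfK //.
Qed.
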